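(* If two gyrochords $A_1A_2$ and $B_1B_2$ of a gyrocircle in the Einstein gyrovector space $\mathbb{R}^n_s$ intersect at a point $P$, then $$\frac{\gamma_{|PA_1|}|PA_1|\,\gamma_{|PA_2|}|PA_2|}{\gamma_{|A_1A_2|}+1}=\frac{\gamma_{|PB_1|}|PB_1|\,\gamma_{|PB_2|}|PB_2|}{\gamma_{|B_1B_2|}+1},$$ where $|XY|=\|\ominus X\oplus Y\|$ denotes gyrodistance and $\gamma_a=(1-a^2/s^2)^{-1/2}$.
   Context: Fix $s>0$, $n\ge2$; $\mathbb{R}^n_s=\{v\in\mathbb{R}^n:\|v\|<s\}$ with Einstein addition $u\oplus v=\frac{1}{1+u\cdot v/s^2}\{u+\frac{1}{\gamma_u}v+\frac{1}{s^2}\frac{\gamma_u}{1+\gamma_u}(u\cdot v)u\}$, $\gamma_v=(1-\|v\|^2/s^2)^{-1/2}$, $\ominus v=-v$. Gyrosegments are Euclidean segments with endpoints in the ball. A gyroplane is $(A_1\oplus\mathrm{span}\{\ominus A_1\oplus A_2,\ominus A_1\oplus A_3\})\cap\mathbb{R}^n_s$ for $\ominus A_1\oplus A_2,\ominus A_1\oplus A_3$ linearly independent; a gyrocircle with gyrocenter $O$ and gyroradius $r>0$ is the set of points of a gyroplane containing $O$ at gyrodistance $r$ from $O$. A gyrochord is a gyrosegment whose two endpoints lie on the gyrocircle. *)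

(* Defs.v *)
From mathcomp Require Import all_boot all_order all_algebra.
From mathcomp Require Import reals.
Set Implicit Arguments. Unset Strict Implicit. Unset Printing Implicit Defensive.
Import Order.TTheory GRing.Theory Num.Theory.
Local Open Scope ring_scope.

Section Einstein.
Variables (R : realType) (n : nat).

Definition dotv (u v : 'rV[R]_n) : R := \sum_(i < n) u 0 i * v 0 i.
Definition normv (v : 'rV[R]_n) : R := Num.sqrt (dotv v v).

Definition gammaR (s a : R) : R := (Num.sqrt (1 - a ^+ 2 / s ^+ 2))^-1.
Definition gammaV (s : R) (v : 'rV[R]_n) : R := gammaR s (normv v).

Definition eadd (s : R) (u v : 'rV[R]_n) : 'rV[R]_n :=
  (1 + dotv u v / s ^+ 2)^-1 *:
    (u + (gammaV s u)^-1 *: v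
       + (s ^+ 2)^-1 * (gammaV s u / (1 + gammaV s u)) * dotv u v *: u).

Definition eopp (v : 'rV[R]_n) : 'rV[R]_n := - v.

Definition in_ball (s : R) (v : 'rV[R]_n) : Prop := normv v < s.

Definition gyrodist (s : R) (X Y : 'rV[R]_n) : R := normv (eadd s (eopp X) Y).

Definition lin_indep2 (u v : 'rV[R]_n) : Prop :=
  forall a b : R, a *: u + b *: v = 0 -> a = 0 /\ b = 0.

Definition is_gyroplane_data (s : R) (A1 A2 A3 : 'rV[R]_n) : Prop :=
  [/\ in_ball s A1, in_ball s A2, in_ball s A3 &
      lin_indep2 (eadd s (eopp A1) A2) (eadd s (eopp A1) A3)].

Definition in_gyroplane (s : R) (A1 A2 A3 X : 'rV[R]_n) : Prop :=
  in_ball s X /\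
  exists a b : R,
    X = eadd s A1 (a *: eadd s (eopp A1) A2 + b *: eadd s (eopp A1) A3).

Definition on_gyrocircle (s : R) (A1 A2 A3 O : 'rV[R]_n) (r : R)
  (X : 'rV[R]_n) : Prop :=
  in_gyroplane s A1 A2 A3 X /\ gyrodist s O X = r.

(* gyrosegment = Euclidean segment *)
Definition on_segment (X Y P : 'rV[R]_n) : Prop :=
  exists t : R, 0 <= t <= 1 /\ P = (1 - t) *: X + t *: Y.

End Einstein.

(* Main.v *)
Require Import Defs.
From mathcomp Require Import all_boot all_order all_algebra.
From mathcomp Require Import reals.
From mathcomp Require Import ring lra.
Import Order.TTheory GRing.Theory Num.Theory.
Local Open Scope ring_scope.

Lemma alg (R : realType) (s l m G f1 f2 c : R) :
  0 < s -> 0 <= l -> 0 <= m -> 0 < G -> 0 <= G ^+ 2 - 1 -> 0 < c ->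
  l * (l + m * G) + m * (l * G + m) = 1 ->
  0 <= f1 -> 0 <= f2 ->
  f1 ^+ 2 = s ^+ 2 * ((l + m * G) ^+ 2 - 1) ->
  f2 ^+ 2 = s ^+ 2 * ((l * G + m) ^+ 2 - 1) ->
  f1 * f2 / (G + 1) = s ^+ 2 * (1 - ((l + m) * c) ^+ 2 / c ^+ 2) / 2.
Proof.
move=> hs hl hm hG hG2 hc hrel hf1 hf2 e1 e2.
set k := Num.sqrt (G ^+ 2 - 1).
have hk : k ^+ 2 = G ^+ 2 - 1 by rewrite sqr_sqrtr.
have k0 : 0 <= k by apply: sqrtr_ge0.
have F1 : f1 = s * m * k.
  apply/eqP; rewrite -(eqrXn2 (n:=2)) //; last by rewrite !mulr_ge0 // ltW.
  have h1 : (l + m * G) ^+ 2 - 1 = m ^+ 2 * (G ^+ 2 - 1) by lra.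
  apply/eqP; rewrite e1 !exprMn hk h1; ring.
have F2 : f2 = s * l * k.
  apply/eqP; rewrite -(eqrXn2 (n:=2)) //; last by rewrite !mulr_ge0 // ltW.
  have h1 : (l * G + m) ^+ 2 - 1 = l ^+ 2 * (G ^+ 2 - 1) by lra.
  apply/eqP; rewrite e2 !exprMn hk h1; ring.
have cne : c != 0 by rewrite gt_eqF.
have Gne : G + 1 != 0 by rewrite gt_eqF // addr_gt0.
have -> : ((l + m) * c) ^+ 2 / c ^+ 2 = (l + m) ^+ 2 by field.
rewrite F1 F2.
have -> : s * m * k * (s * l * k) = s ^+ 2 * l * m * k ^+ 2 by ring.
rewrite hk.
have -> : s ^+ 2 * l * m * (G ^+ 2 - 1) / (G + 1) = s ^+ 2 * (l * m * (G - 1)) by field.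
have -> : (1 - (l + m) ^+ 2) = 2 * (l * m * (G - 1)) by lra.
by field.
Qed.

Section H.
Variables (R : realType) (n : nat).
Implicit Types (u v w A B Z O P : 'rV[R]_n) (a b : R).

Lemma dotvC u v : dotv u v = dotv v u.
Proof. by apply: eq_bigr => i _; rewrite mulrC. Qed.
Lemma dotvDl u v w : dotv (u + v) w = dotv u w + dotv v w.
Proof. by rewrite /dotv -big_split; apply: eq_bigr => i _; rewrite !mxE mulrDl. Qed.
Lemma dotvZl a u w : dotv (a *: u) w = a * dotv u w.
Proof. by rewrite /dotv mulr_sumr; apply: eq_bigr => i _; rewrite !mxE mulrA. Qed.
Lemma dotvNl u w : dotv (- u) w = - dotv u w.
Proof. by rewrite -scaleN1r dotvZl mulN1r. Qed.
Lemma dotvDr u v w : dotv w (u + v) = dotv w u + dotv w v.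
Proof. by rewrite dotvC dotvDl !(dotvC w). Qed.
Lemma dotvZr a u w : dotv w (a *: u) = a * dotv w u.
Proof. by rewrite dotvC dotvZl dotvC. Qed.
Lemma dotvNr u w : dotv w (- u) = - dotv w u.
Proof. by rewrite dotvC dotvNl dotvC. Qed.
Lemma dotv_ge0 u : 0 <= dotv u u.
Proof. by apply: sumr_ge0 => i _; rewrite -expr2 sqr_ge0. Qed.
Lemma normv_sq u : normv u ^+ 2 = dotv u u.
Proof. by rewrite /normv sqr_sqrtr // dotv_ge0. Qed.
Lemma normv_ge0 u : 0 <= normv u.
Proof. exact: sqrtr_ge0. Qed.

Variable s : R.
Hypothesis hs : 0 < s.

Lemma ball_dot u : in_ball s u -> dotv u u < s ^+ 2.
Proof. rewrite /in_ball -normv_sq => h; have := normv_ge0 u; nra. Qed.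

Lemma dot_bound u v : dotv u u < s ^+ 2 -> dotv v v < s ^+ 2 ->
  - s ^+ 2 < dotv u v < s ^+ 2.
Proof.
move=> hu hv; have h1 := dotv_ge0 (u + v); have h2 := dotv_ge0 (u - v).
rewrite !(dotvDl, dotvDr, dotvNl, dotvNr) (dotvC v u) in h1 h2.
apply/andP; split; lra.
Qed.

Definition gam u := gammaV s u.

Lemma gam_eq u : dotv u u < s ^+ 2 ->
  0 < gam u /\ gam u ^+ 2 * (1 - dotv u u / s ^+ 2) = 1.
Proof.
move=> hu; have hx : 0 < 1 - dotv u u / s ^+ 2.
  rewrite subr_gt0 ltr_pdivrMr ?exprn_gt0 // mul1r //.
rewrite /gam /gammaV /gammaR normv_sq; split; first by rewrite invr_gt0 sqrtr_gt0.
have hq := sqr_sqrtr (ltW hx).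
have hne : Num.sqrt (1 - dotv u u / s ^+ 2) != 0 by rewrite gt_eqF // sqrtr_gt0.
rewrite -{2}hq exprVn mulVf // expf_neq0 //.
Qed.

Lemma gamN u : gam (- u) = gam u.
Proof. by rewrite /gam /gammaV /normv dotvNl dotvNr opprK. Qed.

Definition Gm u v := gam u * gam v * (1 - dotv u v / s ^+ 2).

Lemma eadd_dot u v : dotv u u < s ^+ 2 -> dotv v v < s ^+ 2 ->
  let w := eadd s (eopp u) v in
  1 - dotv w w / s ^+ 2 = (Gm u v ^+ 2)^-1.
Proof.
move=> hu hv /=; rewrite /eadd /eopp.
have [hg1 hg2] := gam_eq _ hu; have [hh1 hh2] := gam_eq _ hv.
have /andP[hd1 hd2] := dot_bound _ _ hu hv.
rewrite -/(gam (-u)) gamN.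
rewrite !(dotvDl, dotvDr, dotvZl, dotvZr, dotvNl, dotvNr) (dotvC v u).
rewrite /Gm.
set g := gam u in hg1 hg2 *; set h := gam v in hh1 hh2 *.
set x := dotv u v in hd1 hd2 *.
have sne : s != 0 by rewrite gt_eqF.
have gne : g != 0 by rewrite gt_eqF.
have hne : h != 0 by rewrite gt_eqF.
have eu : dotv u u = s ^+ 2 * (1 - g ^-2).
  have e1 : 1 - dotv u u / s ^+ 2 = g ^-2.
    by rewrite -[1 - _](mulKf (expf_neq0 2 gne)) hg2 mulr1.
  by rewrite -e1; field.
have ev : dotv v v = s ^+ 2 * (1 - h ^-2).
  have e2 : 1 - dotv v v / s ^+ 2 = h ^-2.
    by rewrite -[1 - _](mulKf (expf_neq0 2 hne)) hh2 mulr1.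
  by rewrite -e2; field.
rewrite eu ev.
have g1ne : 1 + g != 0 by rewrite gt_eqF // addr_gt0.
have dpos : 0 < 1 - x / s ^+ 2.
  by rewrite subr_gt0 ltr_pdivrMr ?exprn_gt0 // mul1r.
have dne : 1 - x / s ^+ 2 != 0 by rewrite gt_eqF.
rewrite ?mulNr.
field.
by rewrite sne gne hne g1ne subr_eq0 gt_eqF.
Qed.

Lemma Gm_sym u v : Gm u v = Gm v u.
Proof. by rewrite /Gm dotvC (mulrC (gam u)). Qed.

Lemma Gm_self u : dotv u u < s ^+ 2 -> Gm u u = 1.
Proof. by move=> hu; have [_ h] := gam_eq _ hu; rewrite /Gm -expr2. Qed.

Lemma Gm_pos u v : dotv u u < s ^+ 2 -> dotv v v < s ^+ 2 -> 0 < Gm u v.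
Proof.
move=> hu hv; have [g1 _] := gam_eq _ hu; have [h1 _] := gam_eq _ hv.
have /andP[_ hd] := dot_bound _ _ hu hv.
rewrite /Gm mulr_gt0 ?mulr_gt0 //.
by rewrite subr_gt0 ltr_pdivrMr ?exprn_gt0 // mul1r.
Qed.

Lemma gR_gyro u v : dotv u u < s ^+ 2 -> dotv v v < s ^+ 2 ->
  gammaR s (gyrodist s u v) = Gm u v.
Proof.
move=> hu hv; have e := eadd_dot _ _ hu hv; have hG := Gm_pos _ _ hu hv.
rewrite /gammaR /gyrodist normv_sq e -exprVn sqrtr_sqr ger0_norm ?invrK //.
by rewrite invr_ge0 ltW.
Qed.

Lemma f_gyro u v : dotv u u < s ^+ 2 -> dotv v v < s ^+ 2 ->
  (0 <= gammaR s (gyrodist s u v) * gyrodist s u v) /\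
  ((gammaR s (gyrodist s u v) * gyrodist s u v) ^+ 2 = s ^+ 2 * (Gm u v ^+ 2 - 1)).
Proof.
move=> hu hv; have e := eadd_dot _ _ hu hv; have hG := Gm_pos _ _ hu hv.
rewrite gR_gyro //; split; first by apply: mulr_ge0; [exact: ltW | exact: normv_ge0].
rewrite exprMn /gyrodist normv_sq.
set w := dotv _ _ in e *.
have sne : s != 0 by rewrite gt_eqF.
have Gne : Gm u v != 0 by rewrite gt_eqF.
have -> : w = s ^+ 2 * (1 - (1 - w / s ^+ 2)) by field.
by rewrite e; field.
Qed.

Lemma seg_ball A B (t : R) : dotv A A < s ^+ 2 -> dotv B B < s ^+ 2 -> 0 <= t <= 1 ->
  dotv ((1 - t) *: A + t *: B) ((1 - t) *: A + t *: B) < s ^+ 2.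
Proof.
move=> hA hB /andP[t0 t1].
have /andP[d1 d2] := dot_bound _ _ hA hB.
rewrite !(dotvDl, dotvDr, dotvZl, dotvZr) (dotvC B A).
set a := dotv A A in hA d1 d2 *; set b := dotv B B in hB d1 d2 *.
set d := dotv A B in d1 d2 *.
have hs2 : 0 < s ^+ 2 by rewrite exprn_gt0.
have k1 : 0 <= (1 - t) * (1 - t) * (s ^+ 2 - a) by rewrite !mulr_ge0 // subr_ge0 // ltW.
have k2 : 0 <= t * t * (s ^+ 2 - b) by rewrite !mulr_ge0 // subr_ge0 // ltW.
have k3 : 0 <= t * (1 - t) * (s ^+ 2 - d) by rewrite !mulr_ge0 // subr_ge0 // ltW.
have k4 : 0 < (1 - t) * (1 - t) * (s ^+ 2 - a) + t * t * (s ^+ 2 - b).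
  have [ht|ht] := lerP t (1/2).
    have : 0 < (1 - t) * (1 - t) * (s ^+ 2 - a) by rewrite !mulr_gt0 // subr_gt0 //; lra.
    lra.
  have : 0 < t * t * (s ^+ 2 - b) by rewrite !mulr_gt0 // ?subr_gt0 //; lra.
  lra.
lra.
Qed.

Lemma Gm_lin Z A B (t : R) : dotv A A < s ^+ 2 -> dotv B B < s ^+ 2 ->
  let P := (1 - t) *: A + t *: B in
  Gm Z P = ((1 - t) * gam P / gam A) * Gm Z A + (t * gam P / gam B) * Gm Z B.
Proof.
move=> hA hB P; have [g1 _] := gam_eq _ hA; have [h1 _] := gam_eq _ hB.
rewrite /Gm /P !(dotvDr, dotvZr) -/P.
have gne : gam A != 0 by rewrite gt_eqF.
have hne : gam B != 0 by rewrite gt_eqF.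
by field; rewrite gne hne gt_eqF.
Qed.

Lemma chord O (A1 A2 : 'rV[R]_n) P r : dotv O O < s ^+ 2 -> dotv A1 A1 < s ^+ 2 ->
  dotv A2 A2 < s ^+ 2 -> gyrodist s O A1 = r -> gyrodist s O A2 = r ->
  on_segment A1 A2 P ->
  gammaR s (gyrodist s P A1) * gyrodist s P A1
    * (gammaR s (gyrodist s P A2) * gyrodist s P A2)
    / (gammaR s (gyrodist s A1 A2) + 1)
  = s ^+ 2 * (1 - Gm O P ^+ 2 / gammaR s r ^+ 2) / 2.
Proof.
move=> hO h1 h2 r1 r2 [t [ht ->]].
have hP := seg_ball _ _ _ h1 h2 ht.
set Q := (1 - t) *: A1 + t *: A2 in hP *.
have [t0 t1] : 0 <= t /\ t <= 1 by case/andP: ht.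
have [gP _] := gam_eq _ hP; have [g1 _] := gam_eq _ h1; have [g2 _] := gam_eq _ h2.
set l := (1 - t) * gam Q / gam A1.
set m := t * gam Q / gam A2.
have L Z : Gm Z Q = l * Gm Z A1 + m * Gm Z A2 by apply: Gm_lin.
have [f1p f1e] := f_gyro _ _ hP h1.
have [f2p f2e] := f_gyro _ _ hP h2.
have [f3p f3e] := f_gyro _ _ h1 h2.
have c0 : gammaR s r = Gm O A1 by rewrite -r1 gR_gyro.
have c0' : gammaR s r = Gm O A2 by rewrite -r2 gR_gyro.
have GOP : Gm O Q = (l + m) * gammaR s r by rewrite L -c0 -c0'; ring.
have E1 : Gm Q A1 = l + m * Gm A1 A2 by rewrite [LHS]Gm_sym L Gm_self ?mulr1.
have E2 : Gm Q A2 = l * Gm A1 A2 + m by rewrite [LHS]Gm_sym L Gm_self // (Gm_sym A2 A1) mulr1.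
rewrite (gR_gyro A1 A2) // GOP.
apply: alg => //.
- rewrite /l; apply: mulr_ge0; [apply: mulr_ge0; [lra | exact: ltW] | rewrite invr_ge0; exact: ltW].
- rewrite /m; apply: mulr_ge0; [apply: mulr_ge0; [lra | exact: ltW] | rewrite invr_ge0; exact: ltW].
- exact: Gm_pos.
- have : 0 <= s ^+ 2 * (Gm A1 A2 ^+ 2 - 1) by rewrite -f3e sqr_ge0.
  by rewrite pmulr_rge0 // exprn_gt0.
- by rewrite c0; apply: Gm_pos.
- by rewrite -E1 -E2 -(L Q) Gm_self.
- by rewrite f1e E1.
- by rewrite f2e E2.
Qed.

End H.


Theorem mainTheorem6 (R : realType) (n : nat) (s : R)
  (C1 C2 C3 O : 'rV[R]_n) (r : R) (A1 A2 B1 B2 P : 'rV[R]_n) :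
  (2 <= n)%N -> 0 < s ->
  is_gyroplane_data s C1 C2 C3 -> in_gyroplane s C1 C2 C3 O -> 0 < r ->
  on_gyrocircle s C1 C2 C3 O r A1 -> on_gyrocircle s C1 C2 C3 O r A2 ->
  on_gyrocircle s C1 C2 C3 O r B1 -> on_gyrocircle s C1 C2 C3 O r B2 ->
  A1 != A2 -> B1 != B2 ->
  on_segment A1 A2 P -> on_segment B1 B2 P ->
  gammaR s (gyrodist s P A1) * gyrodist s P A1
    * (gammaR s (gyrodist s P A2) * gyrodist s P A2)
    / (gammaR s (gyrodist s A1 A2) + 1)
  = gammaR s (gyrodist s P B1) * gyrodist s P B1
    * (gammaR s (gyrodist s P B2) * gyrodist s P B2)
    / (gammaR s (gyrodist s B1 B2) + 1).
Proof.
move=> _ hs _ [hO _] _ [[hA1 _] rA1] [[hA2 _] rA2] [[hB1 _] rB1] [[hB2 _] rB2] _ _ sA sB.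
have bd := @ball_dot R n s.
have dO := bd _ hO.
rewrite (@chord R n s hs O A1 A2 P r dO (bd _ hA1) (bd _ hA2) rA1 rA2 sA).
by rewrite (@chord R n s hs O B1 B2 P r dO (bd _ hB1) (bd _ hB2) rB1 rB2 sB).
Qed.
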